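(* Let $U\subseteq L_{\mathrm{up}}$ be a set of up-links such that the sets $P_u$, $u\in U$, are pairwise disjoint. Then the dependency graph of $U$ is a branching, i.e. it contains no directed cycle and every vertex has in-degree at most one.
   Context: Let $(G=(V,E),L,w)$ be a WTAP instance (spanning tree $G$, links $L\subseteq\binom V2$, weights $w>0$) with a fixed root $r\in V$, and let $F\subseteq L$ be a WTAP solution, i.e. $\bigcup_{\ell\in F}P_\ell=E$, where $P_\ell$ is the edge set of the tree path between the endpoints of $\ell$ and $V_\ell$ its vertex set. Ancestors of $v$ are the vertices on the $r$-$v$ path in $G$ (including $r$ and $v$); descendants are defined reciprocally. $\mathrm{apex}(\ell)$ is the vertex of $V_\ell$ closest to $r$. An up-link is a link $\{t,b\}$ with $t$ an ancestor of $b$; $L_{\mathrm{up}}$ is the set of up-links. For $v\in V$ let $B_v=\{\ell\in F\colon\mathrm{apex}(\ell)\text{ is a descendant of }v\}$. For an up-link $u=\{t,b\}$ with $t$ an ancestor of $b$, let $v_u$ be the ancestor of $t$ farthest from $r$ such that $P_u\subseteq\bigcup_{\ell\in B_{v_u}}P_\ell$, and fix $F_u\subseteq B_{v_u}$ inclusion-wise minimal with $P_u\subseteq\bigcup_{\ell\in F_u}P_\ell$. For $\ell\in F_u$ let $P_{u,\ell}=P_u\setminus\bigcup_{\bar\ell\in F_u\setminus\{\ell\}}P_{\bar\ell}$; these sets are nonempty, pairwise disjoint, and each is the edge set of a path. Define $\ell_1\prec_u\ell_2$ iff the edges of $P_{u,\ell_1}$ appear before those of $P_{u,\ell_2}$ on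 the $t$-$b$ path in $G$. If $\ell_1\prec_u\cdots\prec_u\ell_q$ are the links of $F_u$, let $A_u=\{(\ell_i,\ell_{i+1})\colon i=1,\dots,q-1\}$. The dependency graph of a set $U\subseteq L_{\mathrm{up}}$ is the directed graph with vertex set $F$ whose arc set is the disjoint union of the sets $A_u$, $u\in U$. *)

(* Defs.v *)
From HB Require Import structures.
From mathcomp Require Export all_boot.
From Stdlib Require Export Relations.

Set Implicit Arguments.
Unset Strict Implicit.
Unset Printing Implicit Defensive.

Section WTAP.
Variable V : finType.

Definition adj (E : {set {set V}}) : rel V := fun x y => [set x; y] \in E.

Definition spath (E : {set {set V}}) (x y : V) (p : seq V) : bool :=
  [&& path (adj E) x p, last x p == y & uniq (x :: p)].

Definition path_edges (x : V) (p : seq V) : seq {set V} :=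
  pairmap (fun a b => [set a; b]) x p.

Definition is_spanning_tree (E : {set {set V}}) : Prop :=
  [/\ (forall e, e \in E -> #|e| = 2),
      (forall x y : V, exists p, spath E x y p) &
      (forall (x : V) (p : seq V), 2 <= size p -> uniq (x :: p) ->
          path (adj E) x p -> ~~ adj E (last x p) x)].

Definition tree_pathE (E : {set {set V}}) (x y : V) (e : {set V}) : Prop :=
  exists p, spath E x y p /\ e \in path_edges x p.
Definition tree_pathV (E : {set {set V}}) (x y w : V) : Prop :=
  exists p, spath E x y p /\ w \in x :: p.

Definition link_edges (E : {set {set V}}) (l e : {set V}) : Prop :=
  exists x y, [/\ l = [set x; y], x != y & tree_pathE E x y e].
Definition link_verts (E : {set {set V}}) (l : {set V}) (w : V) : Prop :=
  exists x y, [/\ l = [set x; y], x != y & tree_pathV E x y w].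

Definition ancestor (E : {set {set V}}) (r a v : V) : Prop := tree_pathV E r v a.

Definition closer_eq (E : {set {set V}}) (r a w : V) : Prop :=
  forall pa pw, spath E r a pa -> spath E r w pw -> size pa <= size pw.

Definition is_apex (E : {set {set V}}) (r : V) (l : {set V}) (a : V) : Prop :=
  link_verts E l a /\ forall w, link_verts E l w -> closer_eq E r a w.

Definition up_link (E : {set {set V}}) (r : V) (u : {set V}) : Prop :=
  exists t b, [/\ u = [set t; b], t != b & ancestor E r t b].

Definition Bset (E F : {set {set V}}) (r v : V) (l : {set V}) : Prop :=
  l \in F /\ exists a, is_apex E r l a /\ ancestor E r v a.

Definition covers (E : {set {set V}}) (S : {set V} -> Prop) (t b : V) : Prop :=
  forall e, tree_pathE E t b e -> exists l, S l /\ link_edges E l e.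

Definition is_vu (E F : {set {set V}}) (r t b v : V) : Prop :=
  [/\ ancestor E r v t, covers E (Bset E F r v) t b &
      forall v', ancestor E r v' t -> covers E (Bset E F r v') t b ->
                 closer_eq E r v' v].

Definition is_Fu (E F : {set {set V}}) (r t b : V) (Fu : {set {set V}}) : Prop :=
  exists v, [/\ is_vu E F r t b v,
               (forall l, l \in Fu -> Bset E F r v l),
               covers E (fun l => l \in Fu) t b &
               forall S : {set {set V}}, S \proper Fu ->
                 ~ covers E (fun l => l \in S) t b].

Definition private_edges (E : {set {set V}}) (t b : V) (Fu : {set {set V}})
    (l e : {set V}) : Prop :=
  tree_pathE E t b e /\
  ~ (exists l', [/\ l' \in Fu, l' != l & link_edges E l' e]).

Definition prec (E : {set {set V}}) (t b : V) (Fu : {set {set V}})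
    (l1 l2 : {set V}) : Prop :=
  exists p, spath E t b p /\
    forall e1 e2, private_edges E t b Fu l1 e1 -> private_edges E t b Fu l2 e2 ->
      index e1 (path_edges t p) < index e2 (path_edges t p).

Definition arcs_of (E : {set {set V}}) (t b : V) (Fu : {set {set V}})
    (l1 l2 : {set V}) : Prop :=
  exists s : seq {set V},
    [/\ perm_eq s (enum Fu),
        (forall i j, i < j -> j < size s -> prec E t b Fu (nth set0 s i) (nth set0 s j)) &
        exists i, [/\ i.+1 < size s, l1 = nth set0 s i & l2 = nth set0 s i.+1]].

(* arcs of the dependency graph of U: an arc (l1,l2) labelled by u in U
   (the arc set is the disjoint union of the A_u) *)
Definition dep_arc (E : {set {set V}}) (r : V) (U : {set {set V}})
    (Fu : {set V} -> {set {set V}}) (u l1 l2 : {set V}) : Prop :=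
  u \in U /\ exists t b,
    [/\ u = [set t; b], t != b, ancestor E r t b & arcs_of E t b (Fu u) l1 l2].

End WTAP.

Definition branching (A T : Type) (arc : A -> T -> T -> Prop) : Prop :=
  (forall x : T, ~ clos_trans T (fun x y => exists a, arc a x y) x x) /\
  (forall (a a' : A) (x x' y : T), arc a x y -> arc a' x' y -> a = a' /\ x = x').

(* Main.v *)
Require Import Defs.
From Stdlib Require Import Classical.
From mathcomp Require Import zify.
Set Implicit Arguments.
Unset Strict Implicit.
Unset Printing Implicit Defensive.

Section Tree.
Variable V : finType.
Variable E : {set {set V}}.
Hypothesis HT : is_spanning_tree E.

Lemma adjC x y : adj E x y = adj E y x.
Proof. by rewrite /adj setUC. Qed.

Lemma adj_neq x y : adj E x y -> x != y.
Proof.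
case: HT => Hs _ _ /Hs; rewrite /adj; case: eqP => // -> ; by rewrite setUid cards1.
Qed.

Lemma spath_self x p : spath E x x p -> p = [::].
Proof.
case: p => // a p /and3P [_ /eqP Hl /andP [Hx _]].
by move: Hx; rewrite -{1}Hl /= mem_last.
Qed.

Lemma spath_tail x y a p : spath E x y (a :: p) -> spath E a y p.
Proof.
by rewrite /spath; case/and3P => /= /andP [_ ->] -> /andP [_ ->].
Qed.

Lemma cyc x a s : path (adj E) x s -> uniq (x :: s) -> adj E x a ->
  a \in s -> a != head a s -> False.
Proof.
move=> Hp Hu Hxa Ha Hh.
case: HT => _ _ Hac.
have Hi : index a s < size s by rewrite index_mem.
have Hi0 : 0 < index a s.
  by move: Hh Ha; clear; case: s => //= b s; rewrite eq_sym; case: eqP.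
have := Hac x (take (index a s).+1 s).
have Hsz : 2 <= size (take (index a s).+1 s).
  rewrite size_take; case: ifP => _; lia.
have Hu2 : uniq (x :: take (index a s).+1 s) by have := take_uniq (index a s).+2 Hu.
rewrite Hsz Hu2 take_path //.
rewrite (take_nth x) // last_rcons nth_index // adjC Hxa.
by move=> /(_ isT isT isT).
Qed.

Lemma spath_noncross x y a p b q :
  spath E x y (a :: p) -> spath E x y (b :: q) -> a != b -> False.
Proof.
elim: p x a b q => [|a2 p IH] x a b q Hp Hq Hab.
- case/and3P: Hp => Hpa /= /eqP Hy _.
  case/and3P: Hq => Hpq Hy' Hu.
  case: (boolP (a \in b :: q)) => Ha.
  + by apply: (cyc Hpq Hu _ Ha) => //; move: Hpa => /= /andP [].
  + by move: Ha; rewrite Hy -(eqP Hy') /= mem_last.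
- case/and3P: (Hq) => Hpq Hy' Hu.
  case/and3P: (Hp) => Hpa Hya Hua.
  have Hxa : adj E x a by move: Hpa => /= /andP [].
  case: (boolP (a \in b :: q)) => Ha.
  + exact: (cyc Hpq Hu Hxa Ha).
  + apply: (IH a a2 x (b :: q)).
    * exact: spath_tail Hp.
    * apply/and3P; split; first by apply/andP; split; [rewrite adjC | exact Hpq].
      - by [].
      - rewrite /=; move: Hu => /= ->; rewrite andbT.
        move: Ha; rewrite !inE negb_or => /andP [H1 H2].
        by rewrite !negb_or eq_sym (adj_neq Hxa) H1 H2.
    * move: Hua => /= /andP [Hxn _]; move: Hxn; rewrite !inE !negb_or => /and3P [_ Hx2 _].
      by rewrite eq_sym.
Qed.

Lemma spath_uniq x y p q : spath E x y p -> spath E x y q -> p = q.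
Proof.
elim: p x q => [|a p IH] x [|b q] Hp Hq //.
- by case/and3P: Hp => _ /= /eqP Hxy _; move: Hq; rewrite -Hxy => /spath_self.
- by case/and3P: Hq => _ /= /eqP Hy _; move: Hp; rewrite -Hy => /spath_self.
- case: (eqVneq a b) Hq => [<-|Hab] Hq.
  + by rewrite (IH a q (spath_tail Hp) (spath_tail Hq)).
  + by case: (spath_noncross Hp Hq Hab).
Qed.

Lemma tree_conn x y : exists p, spath E x y p.
Proof. by case: HT => _ Hc _; apply: Hc. Qed.

Variable r : V.

Definition Pth v : seq V := xchoose (tree_conn r v).

Lemma Pth_sp v : spath E r v (Pth v).
Proof. exact: xchooseP. Qed.

Lemma Pth_eq v p : spath E r v p -> Pth v = p.
Proof. exact: spath_uniq (Pth_sp v). Qed.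

Lemma Pth_last v : last r (Pth v) = v.
Proof. by case/and3P: (Pth_sp v) => _ /eqP. Qed.

Lemma Pth_uniq v : uniq (r :: Pth v).
Proof. by case/and3P: (Pth_sp v). Qed.

Lemma Pth_r : Pth r = [::].
Proof. exact: spath_self (Pth_sp r). Qed.

Definition anc a v : bool := a \in r :: Pth v.

Lemma ancestorE a v : ancestor E r a v <-> anc a v.
Proof.
split; first by case=> p [/Pth_eq <-].
by move=> H; exists (Pth v); split => //; apply: Pth_sp.
Qed.

Lemma anc_refl v : anc v v.
Proof. by rewrite /anc -{1}(Pth_last v) mem_last. Qed.

Lemma anc_r v : anc r v.
Proof. by rewrite /anc inE eqxx. Qed.

Lemma index_last_uniq (x : V) s : uniq (x :: s) -> index (last x s) (x :: s) = size s.
Proof.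
move=> Hu; rewrite (last_nth x) index_uniq //.
Qed.

Lemma anc_take a v : anc a v ->
  Pth a = take (index a (r :: Pth v)) (Pth v).
Proof.
move=> Ha; set S := r :: Pth v; set i := index a S.
have Hi : i < size S by rewrite index_mem.
apply: Pth_eq; apply/and3P; split.
- apply: take_path; by case/and3P: (Pth_sp v).
- have -> : last r (take i (Pth v)) = last r (take i.+1 S) by [].
  by rewrite (take_nth r) // last_rcons nth_index.
- by have := take_uniq i.+1 (Pth_uniq v).
Qed.

Lemma anc_take1 a v : anc a v ->
  r :: Pth a = take (index a (r :: Pth v)).+1 (r :: Pth v).
Proof. by move=> /anc_take ->. Qed.

Lemma anc_index a v : anc a v -> index a (r :: Pth v) = size (Pth a).
Proof.
move=> Ha; have := congr1 size (anc_take1 Ha).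
have Hi : index a (r :: Pth v) < size (r :: Pth v) by rewrite index_mem.
set i := index a _ in Hi *; set S := r :: Pth v in Hi *.
rewrite size_take; case: ifP => H /=; rewrite /S /= in Hi H *; lia.
Qed.

Lemma anc_iff a v b : anc a v ->
  anc b a = (b \in r :: Pth v) && (index b (r :: Pth v) <= index a (r :: Pth v)).
Proof.
move=> Ha; rewrite /anc (anc_take1 Ha).
case: (boolP (b \in r :: Pth v)) => Hb.
- by rewrite in_take.
- by apply/negbTE; apply: contra Hb; apply: mem_take.
Qed.

Lemma anc_trans a b v : anc b a -> anc a v -> anc b v.
Proof. by move=> Hb Ha; move: Hb; rewrite (anc_iff _ Ha) => /andP []. Qed.

Lemma anc_chain a b v : anc a v -> anc b v -> anc a b || anc b a.
Proof.
move=> Ha Hb; rewrite (anc_iff _ Ha) (anc_iff _ Hb).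
have -> : a \in r :: Pth v by []. have -> : b \in r :: Pth v by [].
exact: leq_total.
Qed.

Lemma anc_size a v : anc a v -> size (Pth a) <= size (Pth v).
Proof.
move=> Ha; rewrite -(anc_index Ha).
by move: (Ha); rewrite /anc -index_mem /= ltnS.
Qed.

Lemma anc_size_lt a v : anc a v -> a != v -> size (Pth a) < size (Pth v).
Proof.
move=> Ha Hne; rewrite ltn_neqAle anc_size // andbT.
rewrite -(anc_index Ha); apply: contra Hne => /eqP Hs.
have := nth_index r Ha; rewrite Hs.
by have := Pth_last v; rewrite (last_nth r) => -> // ->.
Qed.

Lemma anc_antisym a b : anc a b -> anc b a -> a = b.
Proof.
move=> H1 H2; apply/eqP; apply/negPn/negP => Hne.
have := anc_size_lt H1 Hne; have := anc_size H2.
by move=> Ha Hb; move: (leq_ltn_trans Ha Hb); rewrite ltnn.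
Qed.


Definition par v := last r (belast r (Pth v)).

Lemma Pth_par c : c != r -> Pth c = rcons (Pth (par c)) c.
Proof.
move=> Hc; rewrite /par.
have Hsp := Pth_sp c; have Hl := Pth_last c.
case: (lastP (Pth c)) Hsp Hl => [|Q z] Hsp Hl.
- by move: Hc; rewrite -Hl eqxx.
- rewrite last_rcons in Hl; subst z.
  rewrite belast_rcons /=.
  suff -> : Pth (last r Q) = Q by [].
  apply: Pth_eq; case/and3P: Hsp => Hp _ Hu.
  apply/and3P; split => //.
  + by move: Hp; rewrite rcons_path => /andP [].
  + by move: Hu; rewrite -rcons_cons rcons_uniq => /andP [].
Qed.

Lemma anc_parE c z : c != r -> anc z c = (z == c) || anc z (par c).
Proof. by move=> Hc; rewrite /anc {1}(Pth_par Hc) -rcons_cons mem_rcons inE. Qed.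

Lemma anc_par c : c != r -> anc (par c) c.
Proof. by move=> Hc; rewrite anc_parE // anc_refl orbT. Qed.

Lemma size_par c : c != r -> size (Pth c) = (size (Pth (par c))).+1.
Proof. by move=> Hc; rewrite {1}(Pth_par Hc) size_rcons. Qed.

Lemma Pth_nil_r v : Pth v = [::] -> v = r.
Proof. by move=> H; rewrite -(Pth_last v) H. Qed.

Lemma adj_par x a : adj E x a ->
  (a != r /\ par a = x) \/ (x != r /\ par x = a).
Proof.
move=> Hxa; have Hne := adj_neq Hxa.
have H1 : forall x a, adj E x a -> a \notin r :: Pth x -> a != r /\ par a = x.
  move=> x' a' Hxa' Hn.
  have Hsp : spath E r a' (rcons (Pth x') a').
    case/and3P: (Pth_sp x') => Hp Hl Hu.
    apply/and3P; split.
    - by rewrite rcons_path Hp (eqP Hl).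
    - by rewrite last_rcons.
    - by rewrite -rcons_cons rcons_uniq Hn Hu.
  have Ha' : a' != r by apply: contra Hn => /eqP ->; rewrite inE eqxx.
  split => //.
  have := Pth_par Ha'; rewrite (Pth_eq Hsp) => /rcons_inj [] /(congr1 (last r)).
  by rewrite !Pth_last.
case: (boolP (a \in r :: Pth x)) => Ha; last by left; apply: H1.
case: (boolP (x \in r :: Pth a)) => Hx; last by right; apply: H1; rewrite // adjC.
have := anc_antisym Ha Hx => Eq.
by move: Hne; rewrite Eq eqxx.
Qed.

Definition edge_of c : {set V} := [set par c; c].

Lemma anc_size_le a v : anc a v -> size (Pth a) <= size (Pth v).
Proof. exact: anc_size. Qed.

Lemma par_neq c : c != r -> par c != c.
Proof.
move=> Hc; apply/eqP => H.
by have := size_par Hc; rewrite H => /eqP; rewrite -[X in X == _]addn0 -addn1 eqn_add2l.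
Qed.

Lemma edge_inj c a : c != r -> a != r -> edge_of c = edge_of a -> c = a.
Proof.
move=> Hc Ha He.
have : c \in edge_of a by rewrite -He /edge_of set22.
rewrite /edge_of !inE => /orP [/eqP Hca|/eqP //].
have : a \in edge_of c by rewrite He /edge_of set22.
rewrite /edge_of !inE => /orP [/eqP Hac|/eqP Hac].
- have := size_par Hc; have := size_par Ha.
  rewrite -Hca -Hac => ->; lia.
- by move: (par_neq Ha); rewrite -Hca Hac eqxx.
Qed.

Lemma step_parity x a c : adj E x a -> c != r ->
  (anc c x != anc c a) = (edge_of c == [set x; a]).
Proof.
move=> Hxa Hc.
wlog [Har Hpa] : x a Hxa / a != r /\ par a = x.
  move=> W; case: (adj_par Hxa) => [H|H]; first exact: W.
  rewrite eq_sym setUC; apply: W => //; by rewrite adjC.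
have Hanc : anc c a = (c == a) || anc c x by rewrite anc_parE // Hpa.
rewrite Hanc.
have HE : (edge_of c == [set x; a]) = (c == a).
  apply/eqP/eqP => [H|->]; last by rewrite /edge_of Hpa.
  by apply: edge_inj => //; rewrite H /edge_of Hpa.
rewrite HE; case: (eqVneq c a) => [->|_]; last by rewrite /= eqxx.
case: (boolP (anc a x)) => //= Hax.
have := anc_size_le Hax; rewrite (size_par Har) Hpa; lia.
Qed.


Lemma path_edges_cons (x a : V) p : path_edges x (a :: p) = [set x; a] :: path_edges a p.
Proof. by []. Qed.

Lemma walk_parity x p c : path (adj E) x p -> c != r ->
  (anc c x != anc c (last x p)) = odd (count_mem (edge_of c) (path_edges x p)).
Proof.
move=> + Hc; elim: p x => [|a p IH] x; first by rewrite /= eqxx.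
move=> /andP [Hxa Hp]; rewrite path_edges_cons [last _ _]/= /= oddD -(IH a Hp) (eq_sym [set x; a]) -step_parity //.
by case: (anc c x); case: (anc c a); case: (anc c (last a p)).
Qed.

Lemma path_edges_sub (y : V) q (e : {set V}) : e \in path_edges y q -> {subset e <= y :: q}.
Proof.
elim: q y => [|a q IH] y //; rewrite path_edges_cons inE => /orP [/eqP -> z|H z Hz].
- by case/set2P => ->; rewrite !inE eqxx ?orbT.
- by rewrite inE (IH a H z Hz) orbT.
Qed.

Lemma path_edges_uniq (x : V) p : uniq (x :: p) -> uniq (path_edges x p).
Proof.
elim: p x => [|a p IH] x // /andP [Hx Hu].
rewrite path_edges_cons cons_uniq IH // andbT.
apply/negP => /path_edges_sub /(_ x) H.
by move: Hx; rewrite H // set21.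
Qed.

Lemma path_edges_edge (x : V) p e : path (adj E) x p -> e \in path_edges x p ->
  exists c, c != r /\ e = edge_of c.
Proof.
elim: p x => [|a p IH] x // /andP [Hxa Hp]; rewrite path_edges_cons inE.
case/orP => [/eqP ->|]; last exact: IH.
case: (adj_par Hxa) => [[Ha Hp']|[Hx Hp']].
- by exists a; rewrite /edge_of Hp'.
- by exists x; rewrite /edge_of Hp' setUC.
Qed.

Lemma spath_parity x y p c : spath E x y p -> c != r ->
  (edge_of c \in path_edges x p) = (anc c x != anc c y).
Proof.
case/and3P => Hp /eqP Hl Hu Hc.
rewrite -Hl walk_parity // count_uniq_mem ?path_edges_uniq //.
by case: (edge_of c \in _).
Qed.

Lemma TP x y c : c != r -> tree_pathE E x y (edge_of c) <-> (anc c x != anc c y).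
Proof.
move=> Hc; split.
- by case=> p [Hs Hin]; rewrite -(spath_parity Hs Hc).
- move=> H; have [p Hs] := tree_conn x y.
  by exists p; split => //; rewrite (spath_parity Hs Hc).
Qed.

Lemma TPe x y e : tree_pathE E x y e ->
  exists c, [/\ c != r, e = edge_of c & anc c x != anc c y].
Proof.
case=> p [Hs Hin].
have [c [Hc He]] : exists c, c != r /\ e = edge_of c.
  by apply: (path_edges_edge _ Hin); case/and3P: Hs.
exists c; split => //; rewrite -(spath_parity Hs Hc) -He //.
Qed.


Lemma path_edges_take (x : V) p n : path_edges x (take n p) = take n (path_edges x p).
Proof.
elim: p x n => [|a p IH] x [|n] //.
by rewrite /= -/(path_edges a (take n p)) IH.
Qed.

Lemma order_lemma t b p e1 e2 c1 c2 : anc t b -> spath E t b p ->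
  c1 != r -> c2 != r -> e1 = edge_of c1 -> e2 = edge_of c2 ->
  e1 \in path_edges t p -> e2 \in path_edges t p ->
  index e1 (path_edges t p) < index e2 (path_edges t p) ->
  [/\ anc c1 c2, anc c1 b, ~~ anc c1 t, anc c2 b & ~~ anc c2 t].
Proof.
move=> Htb Hs Hc1 Hc2 He1 He2 Hin1 Hin2 Hlt.
have Hd : forall c e, c != r -> e = edge_of c -> e \in path_edges t p ->
    anc c b /\ ~~ anc c t.
  move=> c e Hc -> Hin; move: Hin; rewrite (spath_parity Hs Hc).
  case: (boolP (anc c t)) => Hct /=.
  - by rewrite (anc_trans Hct Htb).
  - by case: (anc c b).
have [Hb1 Ht1] := Hd _ _ Hc1 He1 Hin1.
have [Hb2 Ht2] := Hd _ _ Hc2 He2 Hin2.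
set n := (index e1 (path_edges t p)).+1.
have Hsq : spath E t (last t (take n p)) (take n p).
  case/and3P: Hs => Hp _ Hu; apply/and3P; split => //.
  - exact: take_path.
  - exact: (take_uniq n.+1 Hu).
have Hz1 : anc c1 (last t (take n p)).
  have := spath_parity Hsq Hc1; rewrite -He1 path_edges_take in_take // ltnSn.
  by rewrite (negbTE Ht1); case: (anc c1 _).
have Hz2 : ~~ anc c2 (last t (take n p)).
  have := spath_parity Hsq Hc2; rewrite -He2 path_edges_take in_take //.
  rewrite ltnNge Hlt /= (negbTE Ht2) => /esym /negbT.
  by rewrite negbK.
split => //.
case/orP: (anc_chain Hb1 Hb2) => // H21.
by move: Hz2; rewrite (anc_trans H21 Hz1).
Qed.

Definition cut c (l : {set V}) :=
  [exists z in l, anc c z] && [exists z in l, ~~ anc c z].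

Lemma ex2 (P : pred V) x y : [exists z in [set x; y], P z] = P x || P y.
Proof.
apply/existsP/orP.
- by case=> z /andP [/set2P [->|->] Hz]; [left|right].
- by case=> H; [exists x; rewrite set21 | exists y; rewrite set22].
Qed.

Lemma cut2 c x y : cut c [set x; y] = (anc c x != anc c y).
Proof.
rewrite /cut (ex2 (fun z => anc c z)) (ex2 (fun z => ~~ anc c z)).
by case: (anc c x); case: (anc c y).
Qed.

Definition Cs (l : {set V}) := [set z | [forall w in l, anc z w]].

Lemma in_Cs_cut l c1 c2 : ~~ cut c1 l -> cut c2 l -> anc c1 c2 -> c1 \in Cs l.
Proof.
move=> Hn /andP [/existsP [x /andP [Hx Hax]] _] H12.
have H1x := anc_trans H12 Hax.
move: Hn; rewrite /cut negb_and => /orP [/existsPn /(_ x)|/existsPn H].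
- by rewrite Hx H1x.
- rewrite inE; apply/forallP => w; apply/implyP => Hw.
  by have := H w; rewrite Hw /= negbK.
Qed.

Lemma Cs_below l c z : cut c l -> z \in Cs l -> anc z c /\ z != c.
Proof.
case/andP => /existsP [x /andP [Hx Hcx]] /existsP [y /andP [Hy Hcy]].
rewrite inE => /forallP Hz.
have Hzx : anc z x by have := Hz x; rewrite Hx.
have Hzy : anc z y by have := Hz y; rewrite Hy.
case/orP: (anc_chain Hzx Hcx) => H.
- split => //; apply/eqP => Ezc; by move: Hcy; rewrite -Ezc Hzy.
- by move: Hcy; rewrite (anc_trans H Hzy).
Qed.

Lemma potential l1 l2 c1 c2 : cut c1 l1 -> ~~ cut c1 l2 -> cut c2 l2 ->
  anc c1 c2 -> #|Cs l1| < #|Cs l2|.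
Proof.
move=> H1 Hn2 H2 H12.
have Hc1 := in_Cs_cut Hn2 H2 H12.
apply: proper_card; apply/properP; split.
- apply/subsetP => z Hz; have [Hzc _] := Cs_below H1 Hz.
  move: Hc1; rewrite !inE => /forallP Hc; apply/forallP => w; apply/implyP => Hw.
  by have := Hc w; rewrite Hw /=; apply: anc_trans.
- exists c1 => //; apply/negP => Hc; have [_] := Cs_below H1 Hc.
  by rewrite eqxx.
Qed.

Lemma Cs_max (l : {set V}) : (exists w, w \in l) -> exists m, m \in Cs l /\ forall z, z \in Cs l -> anc z m.
Proof.
case=> w Hw.
have Hr : r \in Cs l by rewrite inE; apply/forallP => x; apply/implyP => _; apply: anc_r.
case: (arg_maxnP (fun z => size (Pth z)) Hr) => m Hm Hmax.
exists m; split => // z Hz.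
have Hzw : anc z w by move: Hz; rewrite /Cs in_set => /forallP /(_ w); rewrite Hw.
have Hm' : m \in Cs l := Hm.
have Hmw : anc m w by move: Hm'; rewrite /Cs in_set => /forallP /(_ w); rewrite Hw.
case/orP: (anc_chain Hzw Hmw) => // H.
case: (eqVneq m z) => [->|Hne]; first exact: anc_refl.
have := anc_size_lt H Hne; have := Hmax z Hz; lia.
Qed.


Lemma link_cut l c : c != r -> link_edges E l (edge_of c) -> cut c l.
Proof. by move=> Hc [x [y [-> Hxy /(TP _ _ Hc)]]]; rewrite cut2. Qed.

Lemma cut_link x y l c : l = [set x; y] -> x != y -> c != r -> cut c l ->
  link_edges E l (edge_of c).
Proof.
move=> -> Hxy Hc; rewrite cut2 => H.
by exists x, y; split => //; apply/TP.
Qed.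

Lemma link_two l e : link_edges E l e -> exists x y, l = [set x; y] /\ x != y.
Proof. by case=> x [y [-> Hxy _]]; exists x, y. Qed.

Section Fu.
Variables (t b : V) (Fu : {set {set V}}).
Hypothesis Htb : anc t b.
Hypothesis Hcov : covers E (fun l => l \in Fu) t b.
Hypothesis Hmin : forall S : {set {set V}}, S \proper Fu ->
  ~ covers E (fun l => l \in S) t b.

Lemma priv_ex l : l \in Fu -> exists e, private_edges E t b Fu l e /\ link_edges E l e.
Proof.
move=> Hl; have [e He0] := not_all_ex_not _ _ (Hmin (properD1 Hl)).
have [He Hn] := imply_to_and _ _ He0.
have [l0 [Hl0 Hle]] := Hcov He.
have El0 : l0 = l.
  apply/eqP; apply/negPn/negP => Hne; apply: Hn; exists l0; split => //.
  by rewrite in_setD1 Hne.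
exists e; split; last by rewrite -El0.
split => // -[l' [Hl' Hne Hle']]; apply: Hn; exists l'; split => //.
by rewrite in_setD1 Hne.
Qed.

Lemma prec_antisym l l' : l \in Fu -> l' \in Fu ->
  prec E t b Fu l l' -> prec E t b Fu l' l -> False.
Proof.
move=> Hl Hl' [p [Hs Hi]] [p' [Hs' Hi']].
have [e [He _]] := priv_ex Hl; have [e' [He' _]] := priv_ex Hl'.
have := Hi e e' He He'; have := Hi' e' e He' He.
rewrite (spath_uniq Hs Hs'); lia.
Qed.

Lemma prec_key l1 l2 : l1 \in Fu -> l2 \in Fu -> prec E t b Fu l1 l2 ->
  exists c1 c2, [/\ c1 != r, c2 != r, cut c1 l1, ~~ cut c1 l2 & cut c2 l2] /\
    [/\ anc c1 c2, anc c1 b, ~~ anc c1 t, anc c2 b & ~~ anc c2 t].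
Proof.
move=> Hl1 Hl2 [p [Hs Hi]].
have [e1 [He1 Hle1]] := priv_ex Hl1; have [e2 [He2 Hle2]] := priv_ex Hl2.
have Hlt := Hi e1 e2 He1 He2.
have Hne : l1 != l2.
  apply/eqP => E12; subst l2; have := Hi e2 e1 He2 He1; lia.
have [c1 [Hc1 Ee1 _]] := TPe He1.1.
have [c2 [Hc2 Ee2 _]] := TPe He2.1.
have Hin : forall e, tree_pathE E t b e -> e \in path_edges t p.
  by move=> e [p1 [Hs1 Hin1]]; rewrite -(spath_uniq Hs1 Hs).
have [H12 Hb1 Ht1 Hb2 Ht2] :=
  order_lemma Htb Hs Hc1 Hc2 Ee1 Ee2 (Hin _ He1.1) (Hin _ He2.1) Hlt.
exists c1, c2; split => //; split => //.
- by apply: link_cut => //; rewrite -Ee1.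
- apply/negP => Hcut.
  have [x [y [El2 Hxy]]] := link_two Hle2.
  have := cut_link El2 Hxy Hc1 Hcut; rewrite -Ee1 => Hl2e1.
  by apply: He1.2; exists l2; split => //; rewrite eq_sym.
- by apply: link_cut => //; rewrite -Ee2.
Qed.

Lemma arcs_info l1 l2 : arcs_of E t b Fu l1 l2 ->
  [/\ l1 \in Fu, l2 \in Fu & prec E t b Fu l1 l2].
Proof.
case=> s [Hperm Hsort [i [Hi -> ->]]].
have Hmem : forall j, j < size s -> nth set0 s j \in Fu.
  by move=> j Hj; rewrite -mem_enum -(perm_mem Hperm) mem_nth.
split; [apply: Hmem; lia | exact: Hmem | exact: Hsort].
Qed.

Lemma arcs_pred l1 l1' l2 : arcs_of E t b Fu l1 l2 -> arcs_of E t b Fu l1' l2 -> l1 = l1'.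
Proof.
move=> Ha Ha'.
case: Ha => s [Hperm Hsort [i [Hi E1 E2]]].
case: Ha' => s' [Hperm' Hsort' [i' [Hi' E1' E2']]].
have Hu : uniq s by rewrite (perm_uniq Hperm) enum_uniq.
have Hu' : uniq s' by rewrite (perm_uniq Hperm') enum_uniq.
have HinFu : forall s0 x, perm_eq s0 (enum Fu) -> (x \in s0) = (x \in Fu).
  by move=> s0 x Hp; rewrite (perm_mem Hp) mem_enum.
case: (eqVneq l1 l1') => // Hne; exfalso.
have Hl1s' : l1 \in s'.
  by rewrite (HinFu _ _ Hperm') E1 -(HinFu _ _ Hperm) mem_nth // ltnW.
have Hl1's : l1' \in s.
  by rewrite (HinFu _ _ Hperm) E1' -(HinFu _ _ Hperm') mem_nth // ltnW.
have Hinfu : forall x, x \in s -> x \in Fu by move=> x; rewrite (HinFu _ _ Hperm).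
have Hl1F : l1 \in Fu by rewrite -(HinFu _ _ Hperm) E1 mem_nth // ltnW.
have Hl1'F : l1' \in Fu by rewrite -(HinFu _ _ Hperm') E1' mem_nth // ltnW.
have Hl2F : l2 \in Fu by rewrite -(HinFu _ _ Hperm) E2 mem_nth.
set k := index l1' s. set k' := index l1 s'.
have Hk : k < size s by rewrite index_mem.
have Hk' : k' < size s' by rewrite index_mem.
have Nk : nth set0 s k = l1' by rewrite nth_index.
have Nk' : nth set0 s' k' = l1 by rewrite nth_index.
have Hki : k != i by apply: contra Hne => /eqP Hk0; rewrite E1 -Hk0 Nk.
have Hki1 : k != i.+1.
  apply/eqP => Hk0.
  have : nth set0 s' i' == nth set0 s' i'.+1.
    by rewrite -E1' -E2' -Nk Hk0 -E2.
  rewrite nth_uniq //; first by rewrite eqn_leq ltnn andbF.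
  exact: ltnW.
have Hki' : k' != i' by apply: contra Hne => /eqP Hk0; rewrite E1' -Hk0 Nk'.
have Hki1' : k' != i'.+1.
  apply/eqP => Hk0.
  have : nth set0 s i == nth set0 s i.+1.
    by rewrite -E1 -E2 -Nk' Hk0 -E2'.
  rewrite nth_uniq //; first by rewrite eqn_leq ltnn andbF.
  exact: ltnW.
have P12 : prec E t b Fu l1 l2 by rewrite E1 E2; apply: Hsort.
have P12' : prec E t b Fu l1' l2 by rewrite E1' E2'; apply: Hsort'.
have : (k < i) \/ (i.+1 < k) by lia.
case=> Hc.
- have P1'1 : prec E t b Fu l1' l1 by rewrite -{1}Nk E1; apply: Hsort => //; lia.
  have : (k' < i') \/ (i'.+1 < k') by lia.
  case=> Hc'.
  + have P11' : prec E t b Fu l1 l1' by rewrite -{1}Nk' E1'; apply: Hsort' => //; lia.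
    exact: (prec_antisym Hl1F Hl1'F P11' P1'1).
  + have P21 : prec E t b Fu l2 l1 by rewrite -Nk' E2'; apply: Hsort' => //.
    exact: (prec_antisym Hl1F Hl2F P12 P21).
- have P21' : prec E t b Fu l2 l1' by rewrite -Nk E2; apply: Hsort => //.
  exact: (prec_antisym Hl1'F Hl2F P12' P21').
Qed.

End Fu.

End Tree.

Section Main.
Variables (V : finType) (E L F U : {set {set V}}) (r : V)
    (Fu : {set V} -> {set {set V}}).
Hypothesis HT : is_spanning_tree E.
Hypothesis HFu : forall u t b, u \in U -> u = [set t; b] -> t != b -> ancestor E r t b ->
     is_Fu E F r t b (Fu u).

Local Notation anc := (anc HT r).

Lemma arc_unpack u x y : dep_arc E r U Fu u x y ->
  exists t b, [/\ u = [set t; b], t != b, anc t b, arcs_of E t b (Fu u) x y &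
    (covers E (fun l => l \in Fu u) t b /\
    forall S : {set {set V}}, S \proper Fu u -> ~ covers E (fun l => l \in S) t b)].
Proof.
case=> Hu [t [b [Eu Htb Hanc Harc]]].
have [v [_ _ Hcov Hmin]] := HFu Hu Eu Htb Hanc.
exists t, b; split => //; exact/ancestorE.
Qed.

Lemma arc_pot u x y : dep_arc E r U Fu u x y -> #|Cs HT r x| < #|Cs HT r y|.
Proof.
move=> /arc_unpack [t [b [Eu Htb Hanc Harc [Hcov Hmin]]]].
have [Hx Hy Hp] := arcs_info Hanc Harc.
have [c1 [c2 [[Hc1 Hc2 Hx1 Hy1 Hy2] [H12 _ _ _ _]]]] := prec_key Hanc Hcov Hmin Hx Hy Hp.
exact: potential Hx1 Hy1 Hy2 H12.
Qed.

Lemma arc_edge u x y m : dep_arc E r U Fu u x y ->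
  m \in Cs HT r y -> (forall z, z \in Cs HT r y -> anc z m) ->
  link_edges E u (edge_of HT r m).
Proof.
move=> /arc_unpack [t [b [Eu Htb Hanc Harc [Hcov Hmin]]]] Hm Hmax.
have [Hx Hy Hp] := arcs_info Hanc Harc.
have [c1 [c2 [[Hc1 Hc2 Hx1 Hy1 Hy2] [H12 Hb1 Ht1 Hb2 Ht2]]]] := prec_key Hanc Hcov Hmin Hx Hy Hp.
have Hc1m : anc c1 m := Hmax _ (in_Cs_cut Hy1 Hy2 H12).
have Hmt : ~~ anc m t by apply: contra Ht1 => H; apply: anc_trans H.
have Hmr : m != r by apply: contra Hmt => /eqP ->; apply: anc_r.
have [Hmc2 _] := Cs_below Hy2 Hm.
have Hmb : anc m b := anc_trans Hmc2 Hb2.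
exists t, b; split => //; apply/TP => //.
by rewrite (negbTE Hmt) Hmb.
Qed.

Lemma arc_tb u x y x' : dep_arc E r U Fu u x y -> dep_arc E r U Fu u x' y -> x = x'.
Proof.
move=> /arc_unpack [t [b [Eu Htb Hanc Harc [Hcov Hmin]]]].
move=> /arc_unpack [t' [b' [Eu' Htb' Hanc' Harc' _]]].
have [Ht Hb] : t' = t /\ b' = b.
  have Ht' : t' \in [set t; b] by rewrite -Eu Eu' set21.
  have Hb' : b' \in [set t; b] by rewrite -Eu Eu' set22.
  move: Ht' Hb'; rewrite !inE => /orP [/eqP Ht'|/eqP Ht'] /orP [/eqP Hb'|/eqP Hb'].
  - by move: Htb'; rewrite Ht' Hb' eqxx.
  - by [].
  - subst; have := anc_antisym Hanc Hanc' => E0; by move: Htb; rewrite E0 eqxx.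
  - by move: Htb'; rewrite Ht' Hb' eqxx.
subst t' b'.
exact: (arcs_pred Hanc Hcov Hmin Harc Harc').
Qed.

End Main.

Theorem lemma10 (V : finType) (E L F U : {set {set V}}) (r : V)
    (Fu : {set V} -> {set {set V}}) :
  is_spanning_tree E ->
  (forall l, l \in L -> #|l| = 2) ->
  F \subset L ->
  (forall e, e \in E -> exists l, l \in F /\ link_edges E l e) ->
  U \subset L ->
  (forall u, u \in U -> up_link E r u) ->
  (forall u u', u \in U -> u' \in U -> u != u' ->
     forall e, link_edges E u e -> link_edges E u' e -> False) ->
  (forall u t b, u \in U -> u = [set t; b] -> t != b -> ancestor E r t b ->
     is_Fu E F r t b (Fu u)) ->
  branching (dep_arc E r U Fu).
Proof.
move=> HT _ _ _ _ _ Hdisj HFu; split.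
- move=> x Hc.
  suff : forall a c, clos_trans _ (fun x y => exists u, dep_arc E r U Fu u x y) a c ->
      #|Cs HT r a| < #|Cs HT r c|.
    by move=> /(_ x x Hc); rewrite ltnn.
  move=> a c; elim => [p q [u Hu]|p q s _ IH1 _ IH2].
  + have H := arc_pot HT HFu Hu. exact H.
  + exact: ltn_trans IH1 IH2.
- move=> u u' x x' y Ha Ha'.
  have Hy : exists w, w \in y.
    case: (arc_unpack HT HFu Ha) => // t [b [_ _ Hanc Harc [Hcov Hmin]]].
    have [Hx Hy Hp] := arcs_info Hanc Harc.
    have [c1 [c2 [[_ _ _ _ /andP [/existsP [w /andP [Hw _]] _]] _]]] :=
      prec_key Hanc Hcov Hmin Hx Hy Hp.
    by exists w.
  have [m [Hm Hmax]] := Cs_max HT r Hy.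
  have He := arc_edge HFu Ha Hm Hmax.
  have He' := arc_edge HFu Ha' Hm Hmax.
  have Euu : u = u'.
    apply/eqP; apply/negPn/negP => Hne.
    by apply: (Hdisj u u' Ha.1 Ha'.1 Hne _ He He').
  subst u'; split => //.
  exact: (arc_tb HT HFu Ha Ha').
Qed.
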